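(* Let $G$, $P$, $w$ be as in the context, with all edge costs positive integer multiples of $\delta>0$, where $\delta$ is the largest number dividing all edge costs. Let $s\neq t$ with at least one directed path from $s$ to $t$, let $d_s$ be the number of out-neighbours of $s$, and let $0<\alpha<1$ be such that $\epsilon_{st}(\alpha)=U_s^{\{t,\overline o\}}(\alpha)-L_{st}<\delta/d_s$. Then any out-neighbour $j$ of $s$ maximizing $\check P_{sj}(\alpha)$ over all out-neighbours of $s$ satisfies that the edge $e_{sj}$ lies on a shortest (minimum-cost) path from $s$ to $t$.
   Context: $G=(V,E)$ is a finite directed graph; each edge $e_{ij}\in E$ has a positive cost $w_{ij}$; $P$ is a row-stochastic transition matrix with $P_{ij}>0$ iff $e_{ij}\in E$. $L_{st}$ is the minimum total cost of a directed path from $s$ to $t$. Evaporating network $G_\alpha$: Markov chain on $V\cup\{o\}$ with $P_{ij}(\alpha)=P_{ij}\alpha^{w_{ij}}$ ($i,j\in V$), $P_{io}(\alpha)=1-\sum_jP_{ij}\alpha^{w_{ij}}$, $o$ absorbing. With $t,o$ absorbing and $\mathcal T=V\setminus\{t\}$: $Q_x=Q_x^{\{t,\overline o\}}(\alpha)$ is the probability the chain from $x$ is absorbed at $t$ ($Q_t=1$); $F(\alpha)=(I-P(\alpha)_{\mathcal T\mathcal T})^{-1}$; $F^{\{t,\overline o\}}_{sm}(\alpha)=F_{sm}(\alpha)Q_m/Q_s$; the avoidance hitting cost is $U_s^{\{t,\overline o\}}(\alpha)=\sum_{m\in\mathcal T}F^{\{t,\overline o\}}_{sm}(\alpha)r_m$,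 $r_m=\sum_iP_{mi}(\alpha)w_{mi}Q_i/Q_m$ (the expected walk cost from $s$ conditioned on absorption at $t$). Transformed edge probabilities: $\check P_{ij}(\alpha)=P_{ij}(\alpha)\,Q_j/Q_i$. *)

(* Defs.v *)
From Stdlib Require Import Reals Lra List Arith ClassicalEpsilon.
Import ListNotations.
Open Scope R_scope.

(* Vertices are the naturals 0 .. n-1. Matrices are functions nat -> nat -> R
   (only entries with indices < n are meaningful). *)

Definition rsum (n : nat) (f : nat -> R) : R :=
  fold_right Rplus 0 (map f (seq 0 n)).

Definition edge (n : nat) (P : nat -> nat -> R) (i j : nat) : Prop :=
  (i < n)%nat /\ (j < n)%nat /\ 0 < P i j.

Fixpoint chain (n : nat) (P : nat -> nat -> R) (x : nat) (l : list nat) : Prop :=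
  match l with
  | [] => True
  | y :: l' => edge n P x y /\ chain n P y l'
  end.

Definition is_walk (n : nat) (P : nat -> nat -> R) (s t : nat) (p : list nat) : Prop :=
  exists rest, p = s :: rest /\ chain n P s rest /\ last p s = t /\ (s < n)%nat.

Fixpoint chain_cost (w : nat -> nat -> R) (x : nat) (l : list nat) : R :=
  match l with
  | [] => 0
  | y :: l' => w x y + chain_cost w y l'
  end.

Definition walk_cost (w : nat -> nat -> R) (p : list nat) : R :=
  match p with [] => 0 | x :: l => chain_cost w x l end.

Fixpoint uses_edge (i j : nat) (p : list nat) : Prop :=
  match p with
  | x :: ((y :: _) as l') => (x = i /\ y = j) \/ uses_edge i j l'
  | _ => False
  end.

Definition is_min_cost (n : nat) (P w : nat -> nat -> R) (s t : nat) (L : R) : Prop :=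
  (exists p, is_walk n P s t p /\ walk_cost w p = L) /\
  (forall p, is_walk n P s t p -> L <= walk_cost w p).

Definition Lst (n : nat) (P w : nat -> nat -> R) (s t : nat) : R :=
  epsilon (inhabits 0) (is_min_cost n P w s t).

Definition kron (i j : nat) : R := if Nat.eq_dec i j then 1 else 0.

Definition is_inverse (n : nat) (A B : nat -> nat -> R) : Prop :=
  forall i j, (i < n)%nat -> (j < n)%nat ->
    rsum n (fun k => A i k * B k j) = kron i j /\
    rsum n (fun k => B i k * A k j) = kron i j.

Definition mat_inv (n : nat) (A : nat -> nat -> R) : nat -> nat -> R :=
  epsilon (inhabits (fun _ _ => 0)) (is_inverse n A).

Definition Palpha (P w : nat -> nat -> R) (alpha : R) (i j : nat) : R :=
  P i j * Rpower alpha (w i j).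

(* P(alpha)_{TT} with T = V \ {t}, padded by zeros in row/column t *)
Definition PTT (P w : nat -> nat -> R) (alpha : R) (t : nat) (i j : nat) : R :=
  if Nat.eq_dec i t then 0 else if Nat.eq_dec j t then 0 else Palpha P w alpha i j.

(* F(alpha) = (I - P(alpha)_{TT})^{-1}; the padded matrix is block diagonal,
   its T-block inverse is F(alpha). *)
Definition Fmat (n : nat) (P w : nat -> nat -> R) (alpha : R) (t : nat) : nat -> nat -> R :=
  mat_inv n (fun i j => kron i j - PTT P w alpha t i j).

Definition rsumT (n t : nat) (f : nat -> R) : R :=
  rsum n (fun m => if Nat.eq_dec m t then 0 else f m).

(* absorption probability at t (t, o absorbing): Q_t = 1,
   Q_x = sum_{m in T} F_xm P_mt(alpha) for x in T *)
Definition Qabs (n : nat) (P w : nat -> nat -> R) (alpha : R) (t x : nat) : R :=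
  if Nat.eq_dec x t then 1
  else rsumT n t (fun m => Fmat n P w alpha t x m * Palpha P w alpha m t).

Definition rcost (n : nat) (P w : nat -> nat -> R) (alpha : R) (t m : nat) : R :=
  rsum n (fun i => Palpha P w alpha m i * w m i * Qabs n P w alpha t i)
    / Qabs n P w alpha t m.

Definition Uavoid (n : nat) (P w : nat -> nat -> R) (alpha : R) (s t : nat) : R :=
  rsumT n t (fun m => Fmat n P w alpha t s m * Qabs n P w alpha t m
                       / Qabs n P w alpha t s * rcost n P w alpha t m).

Definition Pcheck (n : nat) (P w : nat -> nat -> R) (alpha : R) (t i j : nat) : R :=
  Palpha P w alpha i j * Qabs n P w alpha t j / Qabs n P w alpha t i.

Definition outdeg (n : nat) (P : nat -> nat -> R) (s : nat) : nat :=
  length (filter (fun j => if Rlt_dec 0 (P s j) then true else false) (seq 0 n)).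

(* Main.v *)
Require Import Defs.
From Stdlib Require Import Reals List Lra Lia Arith ClassicalEpsilon Classical Wf_nat.
From mathcomp Require ssreflect ssrfun ssrbool eqtype ssrnat seq fintype bigop ssralg matrix.
From mathcomp Require Rstruct.
Open Scope R_scope.

Definition inj_hyp (n : nat) (M : nat -> nat -> R) : Prop :=
  forall v : nat -> R, (forall i, (i < n)%nat -> rsum n (fun j => M i j * v j) = 0) ->
    forall i, (i < n)%nat -> v i = 0.

Module InvM.
Import ssreflect ssrfun ssrbool eqtype ssrnat seq fintype bigop ssralg matrix Rstruct.
Import GRing.Theory.
Local Open Scope ring_scope.

Lemma seq_iota a m : List.seq a m = iota a m.
Proof. by elim: m a => //= m IH a; rewrite IH. Qed.

Lemma rsum_big m (f : nat -> R) : rsum m f = \sum_(k < m) f k.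
Proof.
rewrite /rsum seq_iota -(big_mkord xpredT f) /index_iota subn0.
elim: (iota 0 m) => [|a l IH] /=; first by rewrite big_nil.
by rewrite big_cons IH.
Qed.

Lemma inv_exists (n : nat) (M : nat -> nat -> R) :
  inj_hyp n M ->
  exists B, is_inverse n M B.
Proof.
rewrite /inj_hyp; case: n => [|n'] Hinj.
  by exists (fun _ _ => 0) => i j Hi; exfalso; move/ltP: Hi.
pose Mm : 'M[R]_n'.+1 := \matrix_(i, j) M i j.
have Hu : Mm \in unitmx.
  rewrite unitmxE unitfE -det_tr.
  apply/negP => /det0P [v Hv0 Hv].
  move/negP: Hv0; apply; apply/eqP/matrixP => a b.
  rewrite (ord1 a) mxE.
  pose vf := fun k : nat => if (k < n'.+1)%N then v ord0 (inord k) else 0.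
  have Hvf : forall i, (i < n'.+1)%coq_nat -> vf i = 0.
    apply: Hinj => i /ltP Hi.
    rewrite rsum_big.
    have := congr1 (fun A : 'M[R]_(1, n'.+1) => A ord0 (inord i)) Hv.
    rewrite !mxE => H; apply: etrans _ H.
    apply: eq_bigr => k _.
    rewrite /vf; case: ifP => [_|]; last by move=> H; exfalso; move/negbT/negP: H; apply; apply: ltn_ord.
    by rewrite inord_val !mxE inordK // mulrC.
  have Hb : (b < n'.+1)%coq_nat by apply/ltP; exact: ltn_ord.
  have := Hvf b Hb.
  by rewrite /vf; case: ifP => [_|]; [rewrite inord_val|move=> H; exfalso; move/negbT/negP: H; apply; apply: ltn_ord].
exists (fun i j => (invmx Mm) (inord i) (inord j)) => i j /ltP Hi /ltP Hj.
have Hkr : kron i j = (1%:M : 'M[R]_n'.+1) (inord i) (inord j).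
  rewrite mxE /kron; case: Nat.eq_dec => [<-|Hne]; first by rewrite eqxx.
  case: eqP => // /(congr1 val); rewrite /= !inordK // => E; by case: Hne.
rewrite Hkr; split.
- rewrite -(mulmxV Hu) rsum_big mxE.
  symmetry. rewrite (eq_bigr (fun k : 'I_n'.+1 => M i k * invmx Mm (inord k) (inord j))) //.
  move=> k _; rewrite !mxE !inordK // inord_val //.
- rewrite -(mulVmx Hu) rsum_big mxE.
  symmetry. rewrite (eq_bigr (fun k : 'I_n'.+1 => invmx Mm (inord i) (inord k) * M k j)) //.
  move=> k _; rewrite !mxE !inordK // inord_val //.
Qed.
End InvM.


Lemma rsum_S m f : rsum (S m) f = rsum m f + f m.
Proof.
  unfold rsum. rewrite seq_S, map_app, fold_right_app. simpl.
  generalize (map f (seq 0 m)). intro l. replace (f m + 0) with (f m) by ring.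
  induction l as [|a l IH]; simpl; [ring|rewrite IH; ring].
Qed.

Lemma rsum_0 f : rsum 0 f = 0.
Proof. reflexivity. Qed.

Lemma rsum_ext m f g : (forall i, (i < m)%nat -> f i = g i) -> rsum m f = rsum m g.
Proof.
  induction m; intros H; [reflexivity|].
  rewrite !rsum_S, IHm by (intros; apply H; lia). rewrite H by lia. reflexivity.
Qed.

Lemma rsum_plus m f g : rsum m (fun i => f i + g i) = rsum m f + rsum m g.
Proof. induction m; [unfold rsum; simpl; ring|rewrite !rsum_S, IHm; ring]. Qed.

Lemma rsum_minus m f g : rsum m (fun i => f i - g i) = rsum m f - rsum m g.
Proof. induction m; [unfold rsum; simpl; ring|rewrite !rsum_S, IHm; ring]. Qed.

Lemma rsum_scal m c f : rsum m (fun i => c * f i) = c * rsum m f.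
Proof. induction m; [unfold rsum; simpl; ring|rewrite !rsum_S, IHm; ring]. Qed.

Lemma rsum_scalr m c f : rsum m (fun i => f i * c) = rsum m f * c.
Proof. induction m; [unfold rsum; simpl; ring|rewrite !rsum_S, IHm; ring]. Qed.

Lemma rsum_le m f g : (forall i, (i < m)%nat -> f i <= g i) -> rsum m f <= rsum m g.
Proof.
  induction m; intros H; [unfold rsum; simpl; lra|].
  rewrite !rsum_S. assert (rsum m f <= rsum m g) by (apply IHm; intros; apply H; lia).
  specialize (H m ltac:(lia)). lra.
Qed.

Lemma rsum_nonneg m f : (forall i, (i < m)%nat -> 0 <= f i) -> 0 <= rsum m f.
Proof.
  intros H. replace 0 with (rsum m (fun _ => 0)).
  - apply rsum_le; auto.
  - induction m; [reflexivity|rewrite rsum_S, IHm by (intros; apply H; lia); ring].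
Qed.

Lemma rsum_zero m : rsum m (fun _ => 0) = 0.
Proof. induction m; [reflexivity|rewrite rsum_S, IHm; ring]. Qed.

Lemma rsum_term_le m f k : (forall i, (i < m)%nat -> 0 <= f i) -> (k < m)%nat -> f k <= rsum m f.
Proof.
  induction m; intros H Hk; [lia|].
  rewrite rsum_S. destruct (Nat.eq_dec k m) as [->|Hne].
  - assert (0 <= rsum m f) by (apply rsum_nonneg; intros; apply H; lia). lra.
  - assert (f k <= rsum m f) by (apply IHm; [intros; apply H; lia|lia]).
    specialize (H m ltac:(lia)). lra.
Qed.

Lemma rsum_single m k g : (k < m)%nat ->
  rsum m (fun i => if Nat.eq_dec i k then g i else 0) = g k.
Proof.
  induction m; intros Hk; [lia|].
  rewrite rsum_S. destruct (Nat.eq_dec m k) as [->|Hne].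
  - rewrite (rsum_ext _ _ (fun _ => 0)), rsum_zero; [ring|].
    intros i Hi. destruct (Nat.eq_dec i k); [lia|reflexivity].
  - rewrite IHm by lia. ring.
Qed.

Lemma rsum_kron m k f : (k < m)%nat -> rsum m (fun i => kron k i * f i) = f k.
Proof.
  intros Hk. rewrite <- (rsum_single m k f Hk). apply rsum_ext. intros i _.
  unfold kron. destruct (Nat.eq_dec k i), (Nat.eq_dec i k); subst; try lia; ring.
Qed.

Lemma rsum_swap a b (f : nat -> nat -> R) :
  rsum a (fun i => rsum b (fun j => f i j)) = rsum b (fun j => rsum a (fun i => f i j)).
Proof.
  induction a.
  - rewrite rsum_0. symmetry. apply rsum_zero.
  - rewrite rsum_S, IHa. rewrite <- rsum_plus. apply rsum_ext. intros. rewrite rsum_S. reflexivity.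
Qed.

Lemma rsum_nonneg_zero m f k : (forall i, (i < m)%nat -> 0 <= f i) -> rsum m f = 0 ->
  (k < m)%nat -> f k = 0.
Proof.
  intros H H0 Hk. pose proof (rsum_term_le m f k H Hk). pose proof (H k Hk). lra.
Qed.

Lemma rsum_exists_nz m f : rsum m f <> 0 -> exists k, (k < m)%nat /\ f k <> 0.
Proof.
  intros H. destruct (classic (exists k, (k < m)%nat /\ f k <> 0)) as [E|E]; auto.
  exfalso. apply H. rewrite (rsum_ext _ _ (fun _ => 0)); [apply rsum_zero|].
  intros i Hi. destruct (Req_dec (f i) 0); auto. exfalso; eauto.
Qed.

Lemma rsum_lt m f g : (forall i, (i < m)%nat -> f i <= g i) ->
  (exists k, (k < m)%nat /\ f k < g k) -> rsum m f < rsum m g.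
Proof.
  intros H [k [Hk Hlt]].
  assert (g k - f k <= rsum m (fun i => g i - f i)).
  { apply (rsum_term_le m (fun i => g i - f i)); auto. intros i Hi; specialize (H i Hi); lra. }
  rewrite rsum_minus in H0. lra.
Qed.

Lemma argmin m (D : nat -> R) : (0 < m)%nat ->
  exists x, (x < m)%nat /\ forall y, (y < m)%nat -> D x <= D y.
Proof.
  induction m; intros Hm; [lia|].
  destruct m.
  - exists 0%nat. split; [lia|]. intros y Hy. assert (y = 0%nat) by lia. subst; lra.
  - destruct (IHm ltac:(lia)) as [x [Hx Hmin]].
    destruct (Rle_dec (D x) (D (S m))).
    + exists x. split; [lia|]. intros y Hy. destruct (Nat.eq_dec y (S m)); [subst; auto|apply Hmin; lia].
    + exists (S m). split; [lia|]. intros y Hy. destruct (Nat.eq_dec y (S m)); [subst; lra|].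
      specialize (Hmin y ltac:(lia)). lra.
Qed.

Lemma rsum_count n (P : nat -> nat -> R) s c :
  rsum n (fun j => if Rlt_dec 0 (P s j) then c else 0) = INR (outdeg n P s) * c.
Proof.
  unfold outdeg. induction n.
  - simpl. unfold rsum. simpl. ring.
  - rewrite rsum_S, IHn, seq_S, filter_app, length_app. simpl.
    destruct (Rlt_dec 0 (P s n)); simpl; rewrite ?plus_INR; simpl; ring.
Qed.

Lemma min_principle n (A : nat -> nat -> R) (D : nat -> R) :
  (forall x i, (x < n)%nat -> (i < n)%nat -> 0 <= A x i) ->
  (forall x, (x < n)%nat -> rsum n (A x) < 1) ->
  (forall x, (x < n)%nat -> rsum n (fun i => A x i * D i) <= D x) ->
  forall x, (x < n)%nat -> 0 <= D x.
Proof.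
  intros HA HA1 HD x Hx.
  destruct (argmin n D ltac:(lia)) as [m [Hm Hmin]].
  enough (0 <= D m) by (specialize (Hmin x Hx); lra).
  destruct (Rle_dec 0 (D m)) as [|Hneg]; auto. exfalso.
  assert (rsum n (fun i => A m i * D m) <= rsum n (fun i => A m i * D i)).
  { apply rsum_le. intros i Hi. apply Rmult_le_compat_l; auto. }
  rewrite rsum_scalr in H. change (rsum n (fun i => A m i)) with (rsum n (A m)) in H. specialize (HD m Hm). specialize (HA1 m Hm).
  assert ((1 - rsum n (A m)) * D m < 0) by (apply Rmult_pos_neg; lra).
  replace ((1 - rsum n (A m)) * D m) with (D m - rsum n (A m) * D m) in H0 by ring. lra.
Qed.

Lemma F_rec n (A F : nat -> nat -> R) (c : nat -> R) :
  is_inverse n (fun i j => kron i j - A i j) F ->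
  forall x, (x < n)%nat ->
   rsum n (fun m => F x m * c m) = c x + rsum n (fun k => A x k * rsum n (fun m => F k m * c m)).
Proof.
  intros HF x Hx.
  set (Y := fun k => rsum n (fun m => F k m * c m)).
  assert (E : rsum n (fun k => (kron x k - A x k) * Y k) = c x).
  { unfold Y.
    rewrite (rsum_ext _ _ (fun k => rsum n (fun m => (kron x k - A x k) * F k m * c m))).
    2:{ intros k Hk. rewrite <- rsum_scal. apply rsum_ext. intros; ring. }
    rewrite rsum_swap.
    rewrite (rsum_ext _ _ (fun m => kron x m * c m)).
    - apply rsum_kron; auto.
    - intros m Hm. rewrite rsum_scalr. f_equal. apply (HF x m Hx Hm). }
  rewrite (rsum_ext _ _ (fun k => kron x k * Y k - A x k * Y k)) in E by (intros; ring).
  rewrite rsum_minus, rsum_kron in E by auto. fold (Y x). unfold Y in *. lra.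
Qed.


Lemma Rpower_lt1 a y : 0 < a < 1 -> 0 < y -> Rpower a y < 1.
Proof.
  intros Ha Hy. unfold Rpower. rewrite <- exp_0. apply exp_increasing.
  assert (ln a < 0) by (rewrite <- ln_1; apply ln_increasing; lra). nra.
Qed.

Lemma last_cons_default (l : list nat) a d d' : last (a :: l) d = last (a :: l) d'.
Proof. revert a. induction l as [|b l IH]; intros a; [reflexivity|]. simpl. apply IH. Qed.

Lemma walk_extend n P w x i t p : edge n P x i -> is_walk n P i t p ->
  is_walk n P x t (x :: p) /\ walk_cost w (x :: p) = w x i + walk_cost w p /\ uses_edge x i (x :: p).
Proof.
  intros He [r [-> [Hc [Hl Hi]]]]. pose proof He as [Hx _].
  split; [|split].
  - exists (i :: r). split; [reflexivity|]. split; [split; auto|].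
    split; auto. transitivity (last (i :: r) x); [reflexivity|].
    rewrite (last_cons_default r i x i). exact Hl.
  - reflexivity.
  - simpl. auto.
Qed.

Lemma chain_mult n P w delta :
  (forall i j, edge n P i j -> exists k : nat, (1 <= k)%nat /\ w i j = INR k * delta) ->
  forall l x, chain n P x l -> exists K : nat, chain_cost w x l = INR K * delta.
Proof.
  intros Hw l. induction l as [|y l IH]; intros x Hc.
  - exists 0%nat. simpl. ring.
  - destruct Hc as [He Hc]. destruct (Hw _ _ He) as [k [_ Hk]]. destruct (IH y Hc) as [K HK].
    exists (k + K)%nat. simpl. rewrite Hk, HK, plus_INR. ring.
Qed.

Lemma walk_mult n P w delta x t p :
  (forall i j, edge n P i j -> exists k : nat, (1 <= k)%nat /\ w i j = INR k * delta) ->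
  is_walk n P x t p -> exists K : nat, walk_cost w p = INR K * delta.
Proof.
  intros Hw [r [-> [Hc _]]]. simpl. eapply chain_mult; eauto.
Qed.

Lemma Lst_spec n P w delta x t :
  (forall i j, edge n P i j -> exists k : nat, (1 <= k)%nat /\ w i j = INR k * delta) ->
  0 < delta ->
  (exists p, is_walk n P x t p) -> is_min_cost n P w x t (Lst n P w x t).
Proof.
  intros Hw Hd [p0 Hp0]. unfold Lst. apply epsilon_spec.
  set (S := fun K : nat => exists p, is_walk n P x t p /\ walk_cost w p = INR K * delta).
  destruct (dec_inh_nat_subset_has_unique_least_element S) as [K0 [[HK0 Hmin] _]].
  - intros K. apply classic.
  - destruct (walk_mult n P w delta x t p0 Hw Hp0) as [K HK]. exists K, p0. auto.
  - exists (INR K0 * delta). split.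
    + destruct HK0 as [p [Hp Hc]]. exists p. auto.
    + intros p Hp. destruct (walk_mult n P w delta x t p Hw Hp) as [K HK].
      assert (K0 <= K)%nat by (apply Hmin; exists p; auto).
      rewrite HK. apply Rmult_le_compat_r; [lra|]. apply le_INR; auto.
Qed.

Lemma Lst_mult n P w delta x t :
  (forall i j, edge n P i j -> exists k : nat, (1 <= k)%nat /\ w i j = INR k * delta) ->
  0 < delta ->
  (exists p, is_walk n P x t p) -> exists K : nat, Lst n P w x t = INR K * delta.
Proof.
  intros Hw Hd Hr. destruct (Lst_spec n P w delta x t Hw Hd Hr) as [[p [Hp Hc]] _].
  rewrite <- Hc. eapply walk_mult; eauto.
Qed.

Import ListNotations.

Theorem mainTheorem7
  (n : nat) (P w : nat -> nat -> R) (delta : R) (s t : nat) (alpha : R)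
  (HPnn : forall i j, (i < n)%nat -> (j < n)%nat -> 0 <= P i j)
  (HProw : forall i, (i < n)%nat -> rsum n (P i) = 1)
  (Hdelta : 0 < delta)
  (Hw : forall i j, edge n P i j -> exists k : nat, (1 <= k)%nat /\ w i j = INR k * delta)
  (Hdelta_max : forall d, 0 < d ->
     (forall i j, edge n P i j -> exists k : nat, w i j = INR k * d) -> d <= delta)
  (Hs : (s < n)%nat) (Ht : (t < n)%nat) (Hst : s <> t)
  (Hpath : exists p, is_walk n P s t p)
  (Halpha : 0 < alpha < 1)
  (Heps : Uavoid n P w alpha s t - Lst n P w s t < delta / INR (outdeg n P s)) :
  forall j, edge n P s j ->
    (forall j', edge n P s j' -> Pcheck n P w alpha t s j' <= Pcheck n P w alpha t s j) ->
    exists p, is_walk n P s t p /\ walk_cost w p = Lst n P w s t /\ uses_edge s j p.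
Proof.
  intros j Hj Hmax.
  destruct (classic (exists p, is_walk n P s t p /\ walk_cost w p = Lst n P w s t /\ uses_edge s j p))
    as [|Hno]; [assumption|exfalso].
  assert (Hwpos : forall x i, edge n P x i -> 0 < w x i).
  { intros x i He. destruct (Hw x i He) as [k [Hk ->]].
    apply Rmult_lt_0_compat; auto. apply lt_0_INR. lia. }
  assert (HPa0 : forall x i, (x < n)%nat -> (i < n)%nat -> 0 <= Palpha P w alpha x i).
  { intros x i Hx Hi. unfold Palpha, Rpower. apply Rmult_le_pos; auto. left; apply exp_pos. }
  assert (HPaP : forall x i, (x < n)%nat -> (i < n)%nat -> P x i = 0 \/ edge n P x i).
  { intros x i Hx Hi. destruct (HPnn x i Hx Hi); [right; repeat split; auto|left; auto]. }
  assert (HPa_edge : forall x i, edge n P x i -> 0 < Palpha P w alpha x i).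
  { intros x i He. unfold Palpha, Rpower. apply Rmult_lt_0_compat; [apply He|apply exp_pos]. }
  assert (HPa_zero : forall x i, P x i = 0 -> Palpha P w alpha x i = 0).
  { intros x i H. unfold Palpha. rewrite H. ring. }
  assert (HPa1 : forall x, (x < n)%nat -> rsum n (Palpha P w alpha x) < 1).
  { intros x Hx. rewrite <- (HProw x Hx). apply rsum_lt.
    - intros i Hi. destruct (HPaP x i Hx Hi) as [H|H].
      + rewrite HPa_zero by auto. rewrite H. lra.
      + unfold Palpha. pose proof (Rpower_lt1 alpha (w x i) Halpha (Hwpos x i H)).
        destruct H as [_ [_ H]]. nra.
    - destruct (rsum_exists_nz n (P x)) as [k [Hk Hnz]]; [rewrite HProw; auto; lra|].
      exists k. split; auto. destruct (HPaP x k Hx Hk) as [H|H]; [contradiction|].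
      unfold Palpha. pose proof (Rpower_lt1 alpha (w x k) Halpha (Hwpos x k H)).
      destruct H as [_ [_ H]]. nra. }
  set (A := PTT P w alpha t).
  assert (HAt : forall x, A x t = 0).
  { intros x. unfold A, PTT. destruct (Nat.eq_dec x t); auto. destruct (Nat.eq_dec t t); tauto. }
  assert (HtA : forall i, A t i = 0).
  { intros i. unfold A, PTT. destruct (Nat.eq_dec t t); tauto. }
  assert (HAx : forall x i, x <> t -> i <> t -> A x i = Palpha P w alpha x i).
  { intros x i H1 H2. unfold A, PTT. destruct (Nat.eq_dec x t); [tauto|]. destruct (Nat.eq_dec i t); tauto. }
  assert (HA0 : forall x i, (x < n)%nat -> (i < n)%nat -> 0 <= A x i).
  { intros x i Hx Hi. destruct (Nat.eq_dec x t) as [->|]; [rewrite HtA; lra|].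
    destruct (Nat.eq_dec i t) as [->|]; [rewrite HAt; lra|]. rewrite HAx; auto. }
  assert (HA1 : forall x, (x < n)%nat -> rsum n (A x) < 1).
  { intros x Hx. eapply Rle_lt_trans; [|apply (HPa1 x Hx)]. apply rsum_le. intros i Hi.
    destruct (Nat.eq_dec x t) as [->|]; [rewrite HtA; auto|].
    destruct (Nat.eq_dec i t) as [->|]; [rewrite HAt; auto|]. rewrite HAx; auto; lra. }
  assert (HFinv : is_inverse n (fun i j => kron i j - A i j) (Fmat n P w alpha t)).
  { unfold Fmat, mat_inv. apply epsilon_spec. apply InvM.inv_exists. intros v Hv.
    assert (Hfix : forall i, (i < n)%nat -> v i = rsum n (fun j => A i j * v j)).
    { intros i Hi. specialize (Hv i Hi).
      rewrite (rsum_ext _ _ (fun j => kron i j * v j - A i j * v j)) in Hv by (intros; ring).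
      rewrite rsum_minus, rsum_kron in Hv by auto. lra. }
    intros i Hi.
    assert (0 <= v i).
    { apply (min_principle n A v HA0 HA1); auto. intros x Hx. rewrite <- Hfix; auto; lra. }
    assert (0 <= - v i).
    { apply (min_principle n A (fun i => - v i) HA0 HA1); auto. intros x Hx.
      rewrite (rsum_ext _ _ (fun j => -1 * (A x j * v j))) by (intros; ring).
      rewrite rsum_scal, <- Hfix; auto; lra. }
    lra. }
  set (F := Fmat n P w alpha t) in *.
  set (Q := Qabs n P w alpha t).
  set (c := fun m => if Nat.eq_dec m t then 0 else Palpha P w alpha m t).
  assert (HQY : forall k, k <> t -> Q k = rsum n (fun m => F k m * c m)).
  { intros k Hk. unfold Q, Qabs. destruct (Nat.eq_dec k t); [tauto|]. unfold rsumT.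
    apply rsum_ext. intros m Hm. unfold c. destruct (Nat.eq_dec m t); [ring|reflexivity]. }
  assert (HQt : Q t = 1).
  { unfold Q, Qabs. destruct (Nat.eq_dec t t); tauto. }
  assert (HQrec : forall x, (x < n)%nat -> x <> t ->
            Q x = Palpha P w alpha x t + rsum n (fun k => A x k * Q k)).
  { intros x Hx Hxt. rewrite HQY by auto. rewrite (F_rec n A F c HFinv x Hx).
    unfold c at 1. destruct (Nat.eq_dec x t); [tauto|]. f_equal.
    apply rsum_ext. intros k Hk. destruct (Nat.eq_dec k t) as [->|Hkt].
    - rewrite !HAt. ring.
    - rewrite HQY; auto. }
  assert (HQnn : forall x, (x < n)%nat -> 0 <= Q x).
  { apply (min_principle n A Q HA0 HA1). intros x Hx.
    destruct (Nat.eq_dec x t) as [->|Hxt].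
    - rewrite (rsum_ext _ _ (fun _ => 0)) by (intros; rewrite HtA; ring). rewrite rsum_zero, HQt. lra.
    - rewrite (HQrec x Hx Hxt). pose proof (HPa0 x t Hx Ht). lra. }
  assert (HQfull : forall x, (x < n)%nat -> x <> t ->
            Q x = rsum n (fun k => Palpha P w alpha x k * Q k)).
  { intros x Hx Hxt.
    rewrite (rsum_ext _ _ (fun k => A x k * Q k +
               (if Nat.eq_dec k t then Palpha P w alpha x k else 0))).
    - rewrite rsum_plus, rsum_single by auto. rewrite (HQrec x Hx Hxt). ring.
    - intros k Hk. destruct (Nat.eq_dec k t) as [->|Hkt].
      + rewrite HAt, HQt. ring.
      + rewrite HAx; auto. ring. }
  assert (HQwalk : forall l x, (x < n)%nat -> chain n P x l -> last (x :: l) x = t -> 0 < Q x).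
  { intros l. induction l as [|y l IH]; intros x Hx Hc Hl.
    - simpl in Hl. subst. rewrite HQt. lra.
    - destruct Hc as [He Hc].
      assert (0 < Q y).
      { apply IH; auto; [apply He|]. rewrite (last_cons_default l y y x). exact Hl. }
      destruct (Nat.eq_dec x t) as [->|Hxt]; [rewrite HQt; lra|].
      rewrite HQfull by auto.
      eapply Rlt_le_trans; [|apply (rsum_term_le n (fun k => Palpha P w alpha x k * Q k) y)].
      + apply Rmult_lt_0_compat; auto.
      + intros i Hi. apply Rmult_le_pos; auto.
      + apply He. }
  assert (HQs : 0 < Q s).
  { destruct Hpath as [p [r [-> [Hc [Hl _]]]]]. eapply HQwalk; eauto. }
  set (G := fun m => rsum n (fun i => Palpha P w alpha m i * w m i * Q i)).
  set (g := fun m => if Nat.eq_dec m t then 0 else G m).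
  set (Y := fun x => rsum n (fun m => F x m * g m)).
  assert (HG0 : forall m, (m < n)%nat -> m <> t -> Q m = 0 -> G m = 0).
  { intros m Hm Hmt HQ0. unfold G. rewrite (rsum_ext _ _ (fun _ => 0)); [apply rsum_zero|].
    intros i Hi. rewrite HQfull in HQ0 by auto.
    assert (Palpha P w alpha m i * Q i = 0).
    { apply (rsum_nonneg_zero n (fun k => Palpha P w alpha m k * Q k)); auto.
      intros k Hk; apply Rmult_le_pos; auto. }
    replace (Palpha P w alpha m i * w m i * Q i) with (Palpha P w alpha m i * Q i * w m i) by ring.
    rewrite H. ring. }
  assert (HU : Uavoid n P w alpha s t = Y s / Q s).
  { unfold Uavoid, rsumT, Y. unfold Rdiv at 2. rewrite <- rsum_scalr. apply rsum_ext.
    intros m Hm. unfold g. destruct (Nat.eq_dec m t) as [->|Hmt]; [ring|].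
    unfold rcost. fold Q. fold F. change (rsum n (fun i => Palpha P w alpha m i * w m i * Q i)) with (G m).
    destruct (Req_dec (Q m) 0) as [HQ0|HQ0].
    - rewrite HG0, HQ0 by auto. unfold Rdiv. ring.
    - field. split; auto. lra. }
  assert (HYrec : forall x, (x < n)%nat -> Y x = g x + rsum n (fun k => A x k * Y k)).
  { intros x Hx. apply (F_rec n A F g HFinv x Hx). }
  set (Mb := rsum n (fun x => Rabs (Lst n P w x t)) + delta).
  set (phi := fun x => if excluded_middle_informative (exists p, is_walk n P x t p)
                       then Lst n P w x t else Mb).
  assert (HLb : forall x, (x < n)%nat -> Lst n P w x t + delta <= Mb).
  { intros x Hx. unfold Mb. pose proof (Rle_abs (Lst n P w x t)).
    pose proof (rsum_term_le n (fun x => Rabs (Lst n P w x t)) x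
                  (fun i _ => Rabs_pos _) Hx). simpl in H0. lra. }
  assert (Hreach_t : exists p, is_walk n P t t p).
  { exists [t]. exists []. repeat split; auto. }
  assert (Hphi_t : phi t = 0).
  { unfold phi. destruct (excluded_middle_informative _) as [_|Hn]; [|tauto].
    destruct (Lst_spec n P w delta t t Hw Hdelta Hreach_t) as [[p [Hp Hc]] Hmin].
    specialize (Hmin [t] ltac:(exists []; repeat split; auto)). simpl in Hmin.
    destruct (walk_mult n P w delta t t p Hw Hp) as [K HK].
    assert (0 <= INR K * delta) by (apply Rmult_le_pos; [apply pos_INR|lra]). lra. }
  assert (Hphi_s : phi s = Lst n P w s t).
  { unfold phi. destruct (excluded_middle_informative _); tauto. }
  assert (Hphi3 : forall x i, edge n P x i -> phi x <= w x i + phi i).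
  { intros x i He. pose proof (Hwpos x i He) as Hwp. pose proof He as [Hx [Hi _]].
    unfold phi. destruct (excluded_middle_informative (exists p, is_walk n P i t p)) as [Hri|Hri].
    - destruct (Lst_spec n P w delta i t Hw Hdelta Hri) as [[p [Hp Hc]] _].
      destruct (walk_extend n P w x i t p He Hp) as [Hp' [Hc' _]].
      destruct (excluded_middle_informative (exists p, is_walk n P x t p)) as [Hrx|Hrx];
        [|exfalso; eauto].
      destruct (Lst_spec n P w delta x t Hw Hdelta Hrx) as [_ Hmin].
      specialize (Hmin _ Hp'). lra.
    - destruct (excluded_middle_informative (exists p, is_walk n P x t p)); [|lra].
      pose proof (HLb x Hx). lra. }
  assert (Hphi4 : delta <= w s j + phi j - phi s).
  { rewrite Hphi_s. pose proof (Hwpos s j Hj) as Hwp. pose proof Hj as [_ [Hjn _]].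
    unfold phi. destruct (excluded_middle_informative (exists p, is_walk n P j t p)) as [Hrj|Hrj].
    - destruct (Lst_spec n P w delta j t Hw Hdelta Hrj) as [[p [Hp Hc]] _].
      destruct (walk_extend n P w s j t p Hj Hp) as [Hp' [Hc' Hu']].
      destruct (Lst_spec n P w delta s t Hw Hdelta Hpath) as [_ Hmin].
      specialize (Hmin _ Hp').
      destruct (walk_mult n P w delta s t _ Hw Hp') as [K HK].
      destruct (Lst_mult n P w delta s t Hw Hdelta Hpath) as [K0 HK0].
      assert (Hne : walk_cost w (s :: p) <> Lst n P w s t) by (intro E; apply Hno; eauto).
      rewrite HK, HK0 in *.
      assert (INR K0 <= INR K).
      { apply (Rmult_le_reg_r delta); auto. }
      apply INR_le in H.
      assert (K <> K0) by (intro; subst; apply Hne; reflexivity).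
      assert (S K0 <= K)%nat by lia. apply le_INR in H1. rewrite S_INR in H1.
      rewrite Hc' in HK. rewrite Hc in HK. nra.
    - pose proof (HLb s Hs). lra. }
  set (Dd := fun x => Y x - phi x * Q x).
  set (Hf := fun x => rsum n (fun i => Palpha P w alpha x i * Q i * (w x i + phi i - phi x))).
  assert (HDrec : forall x, (x < n)%nat -> x <> t -> Dd x = Hf x + rsum n (fun k => A x k * Dd k)).
  { intros x Hx Hxt. change (Dd x) with (Y x - phi x * Q x). rewrite (HYrec x Hx).
    rewrite (rsum_ext n (fun k => A x k * Dd k) (fun k => A x k * Y k - A x k * (phi k * Q k)))
      by (intros; unfold Dd; ring).
    rewrite rsum_minus.
    rewrite (rsum_ext n (fun k => A x k * (phi k * Q k)) (fun k => Palpha P w alpha x k * (phi k * Q k))).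
    2:{ intros k Hk. destruct (Nat.eq_dec k t) as [->|Hkt].
        - rewrite HAt, Hphi_t. ring.
        - rewrite HAx; auto. }
    unfold Hf.
    rewrite (rsum_ext n (fun i => Palpha P w alpha x i * Q i * (w x i + phi i - phi x)) (fun i => (Palpha P w alpha x i * w x i * Q i + Palpha P w alpha x i * (phi i * Q i))
                                    - phi x * (Palpha P w alpha x i * Q i))) by (intros; ring).
    rewrite rsum_minus, rsum_plus, rsum_scal, <- HQfull by auto.
    unfold g. destruct (Nat.eq_dec x t); [tauto|]. fold (G x). ring. }
  assert (HHf : forall x, (x < n)%nat -> 0 <= Hf x).
  { intros x Hx. apply rsum_nonneg. intros i Hi. destruct (HPaP x i Hx Hi) as [H|H].
    - rewrite HPa_zero by auto. lra.
    - apply Rmult_le_pos; [apply Rmult_le_pos; auto|]. pose proof (Hphi3 x i H). lra. }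
  assert (HDnn : forall x, (x < n)%nat -> 0 <= Dd x).
  { apply (min_principle n A Dd HA0 HA1). intros x Hx.
    destruct (Nat.eq_dec x t) as [->|Hxt].
    - rewrite (rsum_ext _ _ (fun _ => 0)) by (intros; rewrite HtA; ring). rewrite rsum_zero.
      unfold Dd. rewrite Hphi_t, (HYrec t Ht). unfold g. destruct (Nat.eq_dec t t); [|tauto].
      rewrite (rsum_ext _ _ (fun _ => 0)) by (intros; rewrite HtA; ring). rewrite rsum_zero. lra.
    - rewrite (HDrec x Hx Hxt). pose proof (HHf x Hx). lra. }
  assert (HDs : Palpha P w alpha s j * Q j * delta <= Dd s).
  { rewrite (HDrec s Hs Hst).
    assert (0 <= rsum n (fun k => A s k * Dd k)).
    { apply rsum_nonneg. intros k Hk. apply Rmult_le_pos; auto. }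
    assert (Palpha P w alpha s j * Q j * (w s j + phi j - phi s) <= Hf s).
    { pose proof Hj as [_ [Hjn _]].
      apply (rsum_term_le n (fun i => Palpha P w alpha s i * Q i * (w s i + phi i - phi s)) j); auto.
      intros i Hi. destruct (HPaP s i Hs Hi) as [H'|H'].
      - rewrite HPa_zero by auto. lra.
      - apply Rmult_le_pos; [apply Rmult_le_pos; auto|]. pose proof (Hphi3 s i H'). lra. }
    assert (0 <= Palpha P w alpha s j * Q j).
    { pose proof Hj as [_ [Hjn _]]. apply Rmult_le_pos; auto. }
    nra. }
  assert (Hepsj : Pcheck n P w alpha t s j * delta <= Uavoid n P w alpha s t - Lst n P w s t).
  { rewrite HU, <- Hphi_s. unfold Pcheck. fold Q.
    replace (Y s / Q s - phi s) with (Dd s / Q s) by (unfold Dd; field; lra).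
    unfold Rdiv. replace (Palpha P w alpha s j * Q j * / Q s * delta)
      with ((Palpha P w alpha s j * Q j * delta) * / Q s) by ring.
    apply Rmult_le_compat_r; [left; apply Rinv_0_lt_compat; auto|auto]. }
  assert (Hsum : rsum n (Pcheck n P w alpha t s) = 1).
  { unfold Pcheck. fold Q.
    rewrite (rsum_ext _ _ (fun k => Palpha P w alpha s k * Q k * / Q s)) by (intros; reflexivity).
    rewrite rsum_scalr, <- HQfull by auto. field. lra. }
  assert (Hcount : 1 <= INR (outdeg n P s) * Pcheck n P w alpha t s j).
  { rewrite <- Hsum, <- rsum_count. apply rsum_le. intros i Hi.
    destruct (Rlt_dec 0 (P s i)) as [Hp|Hp].
    - apply Hmax. repeat split; auto.
    - assert (P s i = 0) by (pose proof (HPnn s i Hs Hi); lra).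
      unfold Pcheck. rewrite HPa_zero by auto. unfold Rdiv. lra. }
  pose proof (pos_INR (outdeg n P s)) as Hd0.
  assert (Hdpos : 0 < INR (outdeg n P s)).
  { destruct Hd0 as [|H0]; auto. rewrite <- H0 in Hcount. lra. }
  set (d := INR (outdeg n P s)) in *.
  set (pc := Pcheck n P w alpha t s j) in *.
  set (eps := Uavoid n P w alpha s t - Lst n P w s t) in *.
  assert (eps * d < delta).
  { apply (Rmult_lt_compat_r d) in Heps; auto. unfold Rdiv in Heps.
    rewrite Rmult_assoc, Rinv_l in Heps by lra. lra. }
  assert (pc * delta * d <= eps * d) by (apply Rmult_le_compat_r; lra).
  nra.
Qed.
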